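(* Let $\gamma\in\mathbb C$ and $H_1(\gamma)=I-\gamma D$. Then $$(n!)^{1/n}|\gamma|\le K_h\bigl(H_1(\gamma)^{-1}\bigr)\le n|\gamma|.$$
   Context: Let $n\ge1$ and $\mathcal P_n$ the complex vector space of polynomials in one complex variable of degree at most $n$; $D$ is differentiation and $I$ the identity on $\mathcal P_n$ ($I-\gamma D$ is invertible). For nonzero $f$, $Z(f)$ is the multiset of roots of $f$ (with multiplicity; empty for nonzero constants); $Z(0)=\mathbb C$. For finite nonempty $A,B\subset\mathbb C$, $d_h(A,B)=\max_{y\in B}\min_{x\in A}|x-y|$, with conventions $d_h(\emptyset,\emptyset)=0$, $d_h(A,\emptyset)=d_h(\emptyset,A)=+\infty$ for $A\ne\emptyset$, and $d_h(A,B)=0$ if one of $A,B$ equals $\mathbb C$ and the other is nonempty. $K_h(T)=\sup_{f\in\mathcal P_n}d_h(Z(f),Z(Tf))$. *)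

(* Defs.v *)
From HB Require Import structures.
From mathcomp Require Import all_boot all_order all_algebra.
From mathcomp Require Import all_classical all_reals.
From mathcomp Require Import ereal exp.
From mathcomp Require Import complex.
Set Implicit Arguments. Unset Strict Implicit. Unset Printing Implicit Defensive.
Import Order.TTheory GRing.Theory Num.Theory.
Local Open Scope ring_scope.
Local Open Scope classical_set_scope.

Section Defs.
Variable R : realType.
Local Notation C := (R[i]).

Definition cabs (z : C) : R := Normc.normc z.

Definition Pn (n : nat) : set {poly C} := [set f | (size f <= n.+1)%N].

(* Z(f) as a set of points (multiplicities are irrelevant for d_h);
   Z(0) = C, Z(nonzero constant) = empty set. *)
Definition Zset (f : {poly C}) : set C := [set z | root f z].

(* d_h(A,B) = max_{y in B} min_{x in A} |x - y|, with the paper's conventions *)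
Definition d_h (A B : set C) : \bar R :=
  if `[< A = set0 >] && `[< B = set0 >] then 0%E
  else if `[< A = set0 >] || `[< B = set0 >] then +oo%E
  else if `[< A = setT >] || `[< B = setT >] then 0%E
  else ereal_sup [set ereal_inf [set (cabs (x - y))%:E | x in A] | y in B].

Definition K_h (n : nat) (T : {poly C} -> {poly C}) : \bar R :=
  ereal_sup [set d_h (Zset f) (Zset (T f)) | f in Pn n].

End Defs.

(* Main.v *)
Require Import Defs.
From HB Require Import structures.
From mathcomp Require Import all_boot all_order all_algebra.
From mathcomp Require Import all_classical all_reals.
From mathcomp Require Import ereal exp.
From mathcomp Require Import complex.
From mathcomp Require Import ring lra.
Import Order.TTheory GRing.Theory Num.Theory.
Local Open Scope ring_scope.

Section Aux.
Variable R : realType.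
Local Notation C := (R[i]).

Lemma sum_widen0 (V : nmodType) (F : nat -> V) n m :
  (n <= m)%N -> (forall k, (n <= k)%N -> F k = 0) ->
  \sum_(k < n) F k = \sum_(k < m) F k.
Proof.
move=> le F0; elim: m le => [|m IH]; first by rewrite leqn0 => /eqP->.
rewrite leq_eqVlt; case/orP => [/eqP->//|lt].
by rewrite big_ord_recr /= F0 // addr0 IH.
Qed.

Lemma size_deriv_le (p : {poly C}) : (size p^`() <= size p)%N.
Proof.
have [->|nz] := eqVneq p 0; first by rewrite deriv0.
exact: ltnW (lt_size_deriv nz).
Qed.

Lemma size_derivn_le (p : {poly C}) k : (size p^`(k) <= size p)%N.
Proof.
elim: k => [|k IH]; first by rewrite derivn0.
by rewrite derivnS (leq_trans (size_deriv_le _)).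
Qed.

Variable gam : C.

Definition Sop (f : {poly C}) : {poly C} :=
  \sum_(k < size f) gam ^+ k *: f^`(k).

Lemma Sop_big (f : {poly C}) N : (size f <= N)%N -> Sop f = \sum_(k < N) gam ^+ k *: f^`(k).
Proof.
move=> le; rewrite /Sop; apply: (@sum_widen0 _ (fun k => gam ^+ k *: f^`(k))) => // k lek.
by rewrite derivn_poly0 // scaler0.
Qed.

Lemma Sop0 : Sop 0 = 0.
Proof. by rewrite /Sop size_poly0 big_ord0. Qed.

Lemma Sop_rec (f : {poly C}) : Sop f = f + gam *: Sop f^`().
Proof.
have [->|nz] := eqVneq f 0; first by rewrite deriv0 Sop0 scaler0 addr0.
have [N hN] : exists N, size f = N.+1.
  by exists (size f).-1; rewrite prednK // size_poly_gt0.
rewrite (@Sop_big f^`() N); last by rewrite -ltnS -hN lt_size_deriv.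
rewrite /Sop hN big_ord_recl /= expr0 scale1r; congr (_ + _).
rewrite scaler_sumr; apply: eq_bigr => i _.
rewrite scalerA -exprS; congr (_ *: _); by rewrite /bump /= add0n -derivnS derivSn.
Qed.

Lemma Sop_deriv (f : {poly C}) : (Sop f)^`() = Sop f^`().
Proof.
rewrite (@Sop_big f^`() (size f)) ?size_deriv_le // /Sop (big_morph _ (@derivD _) (@deriv0 _)).
by apply: eq_bigr => i _; rewrite derivZ -derivnS derivSn.
Qed.

Lemma Sop_eq (f : {poly C}) : Sop f - gam *: (Sop f)^`() = f.
Proof. by rewrite Sop_deriv {1}Sop_rec addrK. Qed.

Lemma Iop_inj (g : {poly C}) : g - gam *: g^`() = 0 -> g = 0.
Proof.
move=> h; apply/eqP; apply: contraT => nz.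
have lt : (size (- (gam *: g^`())) < size g)%N.
  by rewrite size_polyN (leq_ltn_trans (size_scale_leq _ _)) // lt_size_deriv.
have := congr1 (fun p : {poly C} => size p) h.
rewrite /= size_polyDl // size_poly0 => /eqP.
by rewrite size_poly_eq0 (negPf nz).
Qed.

Lemma size_Sop (f : {poly C}) : (size (Sop f) <= size f)%N.
Proof.
rewrite /Sop; apply: (big_ind (fun p : {poly C} => size p <= size f)%N).
- by rewrite size_poly0.
- by move=> p q hp hq; rewrite (leq_trans (size_polyD _ _)) // geq_max hp hq.
- by move=> i _; rewrite (leq_trans (size_scale_leq _ _)) // size_derivn_le.
Qed.

Definition Lf (P : {poly C}) : C := \sum_(i < size P) P`_i * (i`!)%:R.

Lemma Lf_big (P : {poly C}) N : (size P <= N)%N -> Lf P = \sum_(i < N) P`_i * (i`!)%:R.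
Proof.
move=> le; rewrite /Lf; apply: (@sum_widen0 _ (fun i => P`_i * (i`!)%:R)) => // k lek.
by rewrite nth_default // mul0r.
Qed.

Lemma LfD (P Q : {poly C}) : Lf (P + Q) = Lf P + Lf Q.
Proof.
pose N := maxn (size P) (size Q).
rewrite (@Lf_big (P + Q) N) ?(leq_trans (size_polyD _ _)) //.
rewrite (@Lf_big P N) ?leq_maxl // (@Lf_big Q N) ?leq_maxr //.
by rewrite -big_split /=; apply: eq_bigr => i _; rewrite coefD mulrDl.
Qed.

Lemma LfZ c (P : {poly C}) : Lf (c *: P) = c * Lf P.
Proof.
rewrite (@Lf_big (c *: P) (size P)) ?size_scale_leq // /Lf mulr_sumr.
by apply: eq_bigr => i _; rewrite coefZ mulrA.
Qed.

Lemma Lf0 : Lf 0 = 0.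
Proof. by rewrite /Lf size_poly0 big_ord0. Qed.

Lemma Lf_rec (P : {poly C}) : Lf P = P`_0 + Lf P^`().
Proof.
rewrite (@Lf_big P (size P).+1) // big_ord_recl /= mulr1.
rewrite (@Lf_big P^`() (size P)) ?size_deriv_le //; congr (_ + _).
apply: eq_bigr => i _; rewrite coef_deriv /bump /= add1n factS natrM.
rewrite mulrA; congr (_ * _); exact: mulr_natr.
Qed.

Lemma bridge (f : {poly C}) y : (Sop f).[y] = Lf (f \Po (gam *: 'X + y%:P)).
Proof.
move: {2}(size f) (leqnn (size f)) => n; elim: n f => [|n IH] f hf.
  by move: hf; rewrite leqn0 size_poly_eq0 => /eqP->; rewrite Sop0 comp_poly0 Lf0 horner0.
rewrite Sop_rec hornerD hornerZ IH; last first.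
  have [->|nz] := eqVneq f 0; first by rewrite deriv0 size_poly0.
  by rewrite -ltnS (leq_trans (lt_size_deriv nz)).
rewrite [RHS]Lf_rec -horner_coef0 horner_comp !hornerE /=.
by rewrite deriv_comp derivD derivZ derivX derivC addr0 -scalerAr mulr1 LfZ.
Qed.


Definition Psi (A : {poly C}) (k : nat) : {poly C} :=
  \poly_(l < k.+1) ('C(k, l)%:R * Lf (A * 'X^l)).

Lemma coefPsi (A : {poly C}) k l : (Psi A k)`_l = 'C(k, l)%:R * Lf (A * 'X^l).
Proof.
rewrite /Psi coef_poly; case: ltnP => // h.
by rewrite bin_small // mul0r.
Qed.

Lemma E1 k l : ((k.+1) * 'C(k.+1, l) = k.+1 * 'C(k, l) + l * 'C(k.+1, l))%N.
Proof.
case: (leqP l k.+1) => h.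
  have := mul_bin_down k.+1 l; rewrite /= => ->.
  by rewrite -mulnDl subnK.
by rewrite !bin_small ?muln0 // (leq_trans _ h).
Qed.

Lemma coefXderiv (p : {poly C}) l : ('X * p^`())`_l = p`_l *+ l.
Proof. by rewrite coefXM; case: l => [|l] //=; rewrite coef_deriv. Qed.

Lemma ring_aux (K a b c L1 L2 al : C) (l l2 : nat) :
  K * b = K * a + l%:R * b -> K * a = l2%:R * c ->
  K * (a * (L1 + al * L2)) = K * (b * L1) - (b * L1 *+ l - al * (c * L2 *+ l2)).
Proof.
move=> h1 h2.
rewrite -[b * L1 *+ l]mulr_natr -[c * L2 *+ l2]mulr_natr.
have -> : K * (b * L1) - (b * L1 * l%:R - al * (c * L2 * l2%:R)) =
   (K * b - l%:R * b) * L1 + al * (l2%:R * c) * L2 by ring.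
by rewrite h1 -h2 addrK; ring.
Qed.

Lemma Psi_rec (A : {poly C}) k (al : C) :
  (k.+1)%:R *: Psi (A * (1 + al *: 'X)) k =
  (k.+1)%:R *: Psi A k.+1 - ('X - al%:P) * (Psi A k.+1)^`().
Proof.
apply/polyP => l.
have hA : forall j, A * (1 + al *: 'X) * 'X^j = A * 'X^j + al *: (A * 'X^(j.+1)).
  by move=> j; rewrite exprS -!mul_polyC; ring.
rewrite coefB !coefZ mulrBl coefB coefCM !coefPsi hA LfD LfZ.
rewrite coefXderiv coef_deriv !coefPsi.
apply: ring_aux.
  by rewrite -!natrM -natrD E1.
by rewrite -!natrM mul_bin_diag.
Qed.

Local Notation nc := (@Normc.normc R).

Definition qf (a b p q rho : R) :=
  (rho ^+ 2 - a ^+ 2 - b ^+ 2) * (p ^+ 2 + q ^+ 2) + 2 * (a * p - b * q) - 1.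

Lemma qf_id (a b x y p q rho : R) :
  p * (a - x) - q * (b - y) = 1 -> p * (b - y) + q * (a - x) = 0 ->
  qf a b p q rho = (rho ^+ 2 - x ^+ 2 - y ^+ 2) * (p ^+ 2 + q ^+ 2).
Proof.
move=> h1 h2.
have e1 : x * p - y * q = a * p - b * q - 1.
  by rewrite -h1; ring.
have e2 : x * q + y * p = a * q + b * p.
  by rewrite -[RHS]subr0 -h2; ring.
have e : (x ^+ 2 + y ^+ 2) * (p ^+ 2 + q ^+ 2) =
   (x * p - y * q) ^+ 2 + (x * q + y * p) ^+ 2 by ring.
rewrite e1 e2 in e.
have -> : (rho ^+ 2 - x ^+ 2 - y ^+ 2) * (p ^+ 2 + q ^+ 2) =
   rho ^+ 2 * (p ^+ 2 + q ^+ 2) - (x ^+ 2 + y ^+ 2) * (p ^+ 2 + q ^+ 2) by ring.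
by rewrite e /qf; ring.
Qed.

Lemma qf_disk (a b p q rho : R) : 0 < rho ^+ 2 - a ^+ 2 - b ^+ 2 ->
  let D := rho ^+ 2 - a ^+ 2 - b ^+ 2 in
  (p + a / D) ^+ 2 + (q - b / D) ^+ 2 - (1 + (a ^+ 2 + b ^+ 2) / D) / D =
  qf a b p q rho / D.
Proof.
move=> hD D; rewrite /qf -/D.
have hD0 : D != 0 by rewrite gt_eqF.
by field.
Qed.

Lemma nc_lt (w : C) (rho : R) : 0 < rho ->
  (nc w < rho) = (complex.Re w ^+ 2 + complex.Im w ^+ 2 < rho ^+ 2).
Proof.
move=> r0; case: w => p q /=.
rewrite /Normc.normc -{1}(ger0_norm (ltW r0)) -sqrtr_sqr ltr_sqrt //.
by rewrite exprn_gt0.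
Qed.

Lemma nc_le (w : C) (rho : R) : 0 <= rho ->
  (rho <= nc w) = (rho ^+ 2 <= complex.Re w ^+ 2 + complex.Im w ^+ 2).
Proof.
move=> r0; case: w => p q /=.
by rewrite /Normc.normc -{1}(ger0_norm r0) -sqrtr_sqr ler_sqrt // addr_ge0 ?sqr_ge0.
Qed.

Lemma inv_coord (p q a b x y : R) :
  (p +i* q)%C * ((a +i* b)%C - (x +i* y)%C) = 1 ->
  p * (a - x) - q * (b - y) = 1 /\ p * (b - y) + q * (a - x) = 0.
Proof. by case. Qed.

Lemma geo (rho : R) (a b : R) (ws : seq C) (N : nat) (al wa : C) :
  nc (a +i* b)%C < rho -> nc al < rho -> (0 < N)%N -> (size ws <= N)%N ->
  (forall w, w \in ws -> exists2 be, rho <= nc be & w * ((a +i* b)%C - be) = 1) ->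
  wa * ((a +i* b)%C - al) = 1 ->
  \sum_(w <- ws) w != wa *+ N.
Proof.
move=> hz hal N0 hN hws hwa.
have r0 : 0 < rho by apply: le_lt_trans hz; apply: sqrtr_ge0.
have hz2 := hz; rewrite nc_lt //= in hz2.
set D := rho ^+ 2 - a ^+ 2 - b ^+ 2.
have hD : 0 < D by rewrite /D; lra.
pose c0 : C := ((-(a / D)) +i* (b / D))%C.
pose K := (1 + (a ^+ 2 + b ^+ 2) / D) / D.
have K0 : 0 < K.
  have h : 0 <= (a ^+ 2 + b ^+ 2) / D.
    by apply: divr_ge0; [apply: addr_ge0; apply: sqr_ge0 | apply: ltW].
  by rewrite /K divr_gt0 //; lra.
have inD : forall w : C, (nc (w - c0) <= Num.sqrt K) = (qf a b (complex.Re w) (complex.Im w) rho <= 0).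
  case=> p q /=.
  rewrite /c0 /Normc.normc /= (ler_sqrt _ (ltW K0)) opprK -subr_le0 /K /D.
  by rewrite qf_disk // pmulr_lle0 // invr_gt0.
have in_be : forall w, w \in ws -> qf a b (complex.Re w) (complex.Im w) rho <= 0.
  move=> w /hws [[x y] hbe]; case: w => p q /= /inv_coord [h1 h2].
  rewrite (qf_id a b x y p q rho h1 h2); apply: mulr_le0_ge0; last by apply: addr_ge0; apply: sqr_ge0.
  by move: hbe; rewrite (nc_le _ _ (ltW r0)) /= => h; lra.
have in_al : 0 < qf a b (complex.Re wa) (complex.Im wa) rho.
  move: hwa hal; case: al => x y; rewrite (nc_lt _ _ r0) /= => hwa h.
  move: hwa; case: wa => p q /= /inv_coord [h1 h2].
  rewrite (qf_id a b x y p q rho h1 h2); apply: mulr_gt0; first by lra.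
  have : (p != 0) || (q != 0).
    case: (eqVneq p 0) => [hp|//]; case: (eqVneq q 0) => [hq|]; last by rewrite orbT.
    by move: h1; rewrite hp hq !mul0r subrr => /eqP; rewrite eq_sym oner_eq0.
  case/orP => h0.
    have h3 : 0 < p ^+ 2 by rewrite exprn_even_gt0.
    by have := sqr_ge0 q; lra.
  have h3 : 0 < q ^+ 2 by rewrite exprn_even_gt0.
  by have := sqr_ge0 p; lra.
have in_0 : nc c0 <= Num.sqrt K.
  rewrite -normcN -sub0r inD /=.
  have -> : qf a b 0 0 rho = -1 by rewrite /qf; ring.
  by rewrite lerN10.
have sd : forall (vs : seq C) M, (size vs <= M)%N ->
    (forall w, w \in vs -> nc (w - c0) <= Num.sqrt K) ->
    nc (\sum_(w <- vs) w - c0 *+ M) <= Num.sqrt K *+ M.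
  elim=> [|v vs IH] M hM hv.
    by rewrite big_nil sub0r normcN normcMn; apply: ler_wMn2r.
  case: M hM => [//|M] hM.
  rewrite big_cons !mulrS.
  have -> : v + \sum_(w <- vs) w - (c0 + c0 *+ M) = (v - c0) + (\sum_(w <- vs) w - c0 *+ M).
    by rewrite opprD !addrA; congr (_ + _); rewrite addrAC.
  rewrite (le_trans (le_normcD _ _)) // lerD //; first by apply: hv; rewrite mem_head.
  by apply: IH => // w hw; apply: hv; rewrite inE hw orbT.
apply/eqP => hsum.
have := sd ws N hN (fun w hw => (eq_ind_r _ (in_be w hw) (inD w))).
rewrite hsum -mulrnBl normcMn ler_pMn2r // inD => h.
by have := lt_le_trans in_al h; rewrite ltxx.
Qed.
Lemma logder (rs : seq C) (z : C) : (forall be, be \in rs -> z != be) ->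
  (\prod_(be <- rs) ('X - be%:P))^`().[z] =
  (\prod_(be <- rs) ('X - be%:P)).[z] * \sum_(be <- rs) (z - be)^-1.
Proof.
elim: rs => [|b rs IH] hz.
  rewrite !big_nil mulr0.
  have -> : (1 : {poly C})^`() = 0 by rewrite -polyC1 derivC.
  by rewrite horner0.
have hb : z - b != 0 by rewrite subr_eq0 hz // mem_head.
rewrite !big_cons derivM derivB derivX derivC subr0 mul1r hornerD hornerM.
rewrite IH; last by move=> be hbe; apply: hz; rewrite inE hbe orbT.
rewrite hornerM !hornerE mulrDr; congr (_ + _); first by rewrite mulrAC mulfV // mul1r.
Qed.

Lemma laguerre (rho : R) (Q : {poly C}) k (al : C) :
  (size Q <= k.+2)%N -> (forall x, nc x < rho -> ~~ root Q x) -> nc al < rho ->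
  forall z, nc z < rho -> ~~ root ((k.+1)%:R *: Q - ('X - al%:P) * Q^`()) z.
Proof.
move=> hs hQ hal z hz; apply/negP => hr.
have Qz := hQ z hz.
have Q0 : Q != 0 by apply: contraNneq Qz => ->; rewrite root0.
have [rs hrs] := closed_field_poly_normal Q.
have c0 : lead_coef Q != 0 by rewrite lead_coef_eq0.
have hrootbe : forall be, be \in rs -> rho <= nc be.
  move=> be hbe; rewrite leNgt; apply/negP => /hQ.
  by rewrite hrs rootZ // root_prod_XsubC hbe.
have hzbe : forall be, be \in rs -> z != be.
  move=> be hbe; apply/eqP => ezb; move: Qz.
  by rewrite hrs rootZ // root_prod_XsubC ezb hbe.
have hsize : (size rs <= k.+1)%N.
  by move: hs; rewrite hrs size_scale // size_prod_XsubC.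
have dQ : Q^`().[z] = Q.[z] * \sum_(be <- rs) (z - be)^-1.
  by rewrite hrs derivZ !hornerZ logder // mulrA.
move: hr; rewrite /root hornerD hornerN hornerZ hornerM !hornerE dQ subr_eq0.
move=> /eqP he.
have Qz0 : Q.[z] != 0 by [].
have zal : z - al != 0.
  apply: contraNneq Qz0 => h0; move: he; rewrite h0 mul0r.
  by move/eqP; rewrite mulf_eq0 pnatr_eq0.
have hsum : \sum_(be <- rs) (z - be)^-1 = (z - al)^-1 *+ k.+1.
  have h1 : (z - al) * \sum_(be <- rs) (z - be)^-1 = (k.+1)%:R.
    by apply: (mulfI Qz0); rewrite mulrCA -he mulrC.
  by rewrite -[LHS]mul1r -(mulVf zal) -mulrA h1 mulr_natr.
have hwa : (z - al)^-1 * (z - al) = 1 by rewrite mulVf.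
move: hz hal hsum hzbe hwa; case: z {Qz Qz0 he dQ zal} => a b hz hal hsum hzbe hwa.
have := @geo rho a b [seq ((a +i* b)%C - be)^-1 | be <- rs] k.+1 al _ hz hal (ltn0Sn k).
rewrite size_map big_map hsum => /(_ _ hsize) H.
have hws : forall w, w \in [seq ((a +i* b)%C - be)^-1 | be <- rs] ->
    exists2 be, rho <= nc be & w * ((a +i* b)%C - be) = 1.
  move=> w /mapP [be hbe ->]; exists be; first exact: hrootbe.
  by rewrite mulVf // subr_eq0 hzbe.
by have := H _ hws hwa; rewrite eqxx.
Qed.


Lemma grace (rho : R) (us : seq C) : forall (A : {poly C}) k,
  (forall u, u \in us -> nc u < rho) ->
  (forall z, nc z < rho -> ~~ root (Psi A (size us + k)) z) ->
  forall z, nc z < rho -> ~~ root (Psi (A * \prod_(u <- us) (1 + u *: 'X)) k) z.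
Proof.
elim: us => [|u us IH] A k hu h0.
  by rewrite big_nil mulr1; apply: h0.
rewrite big_cons mulrA; apply: IH.
  by move=> v hv; apply: hu; rewrite inE hv orbT.
move=> z hz.
have hl := @laguerre rho (Psi A (size us + k).+1) (size us + k) u
  (size_poly _ _) h0 (hu _ (mem_head _ _)) z hz.
by rewrite -Psi_rec rootZ ?pnatr_eq0 in hl.
Qed.

Lemma Psi0 (B : {poly C}) : (Psi B 0).[0] = Lf B.
Proof. by rewrite horner_coef0 coefPsi bin0 mul1r expr0 mulr1. Qed.

Lemma nc_ge0 (x : C) : 0 <= nc x.
Proof. by case: x => a b; rewrite /Normc.normc sqrtr_ge0. Qed.

Lemma nc_sum n (F : 'I_n -> C) : nc (\sum_(i < n) F i) <= \sum_(i < n) nc (F i).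
Proof.
apply: (big_ind2 (fun x y => nc x <= y)).
- by rewrite Normc.normc0.
- by move=> x1 x2 y1 y2 h1 h2; rewrite (le_trans (le_normcD _ _)) // lerD.
- by [].
Qed.

Lemma ncX (x : C) k : nc (x ^+ k) = nc x ^+ k.
Proof.
elim: k => [|k IH]; first by rewrite !expr0 Normc.normc1.
by rewrite !exprS Normc.normcM IH.
Qed.

Lemma nc_nat k : nc (k%:R : C) = k%:R.
Proof. by rewrite -[k%:R]/(1 *+ k) normcMn Normc.normc1. Qed.

Lemma ncM (x y : C) : nc (x * y) = nc x * nc y.
Proof. exact: Normc.normcM. Qed.

Definition cc m l := ('C(m, l) * l`!)%N.
Definition rr m l := (m * cc m l - cc m l.+1)%N.

Lemma cc_le m l : (cc m l.+1 <= m * cc m l)%N.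
Proof.
rewrite /cc factS.
have -> : ('C(m, l.+1) * (l.+1 * l`!) = (m - l) * 'C(m, l) * l`!)%N.
  by rewrite mulnA (mulnC 'C(m, l.+1)) mul_bin_left.
by rewrite mulnA; apply: leq_mul => //; apply: leq_mul => //; apply: leq_subr.
Qed.

Lemma ek_id (F : comNzRingType) (m : nat) (z : F) :
  (1 - m%:R * z) * \sum_(l < m.+1) (cc m l)%:R * z ^+ l =
  1 - \sum_(l < m.+1) (rr m l)%:R * z ^+ l.+1.
Proof.
have h1 : \sum_(l < m.+1) (rr m l)%:R * z ^+ l.+1 =
   \sum_(l < m.+1) m%:R * z * ((cc m l)%:R * z ^+ l)
   - \sum_(l < m.+1) (cc m l.+1)%:R * z ^+ l.+1.
  rewrite -sumrB; apply: eq_bigr => i _.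
  rewrite /rr natrB ?cc_le // natrM exprS; ring.
have h2 : \sum_(l < m.+1) (cc m l.+1)%:R * z ^+ l.+1 =
   \sum_(l < m.+1) (cc m l)%:R * z ^+ l - 1.
  have e : \sum_(l < m.+2) (cc m l)%:R * z ^+ l =
     1 + \sum_(l < m.+1) (cc m l.+1)%:R * z ^+ l.+1.
    by rewrite big_ord_recl /cc bin0 fact0 expr0 mulr1.
  have e' : \sum_(l < m.+2) (cc m l)%:R * z ^+ l =
     \sum_(l < m.+1) (cc m l)%:R * z ^+ l.
    by rewrite big_ord_recr /= /cc (bin_small (ltnSn m)) mul0n mul0r addr0.
  by rewrite -e' e; ring.
rewrite h1 h2 -mulr_sumr mulrBl mul1r; ring.
Qed.

Lemma Lf_Xn l : Lf ('X^l) = (l`!)%:R :> C.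
Proof.
rewrite (@Lf_big _ l.+1) ?size_polyXn // big_ord_recr /= coefXn eqxx mul1r.
rewrite big1 ?add0r // => i _; rewrite coefXn.
by have := ltn_ord i; rewrite ltn_neqAle eq_sym => /andP[/negPf -> _]; rewrite mul0r.
Qed.

Lemma Psi1_horner m (z : C) : (Psi 1 m).[z] = \sum_(l < m.+1) (cc m l)%:R * z ^+ l.
Proof.
rewrite /Psi horner_poly; apply: eq_bigr => i _.
by rewrite mul1r Lf_Xn /cc natrM.
Qed.

Lemma sum_rr m : (0 < m)%N ->
  \sum_(l < m.+1) (rr m l)%:R * (m%:R^-1 : R) ^+ l.+1 = 1.
Proof.
move=> m0; have := @ek_id R m (m%:R^-1 : R).
rewrite mulfV ?pnatr_eq0 -?lt0n // subrr mul0r => /eqP.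
by rewrite eq_sym subr_eq0 => /eqP <-.
Qed.

Lemma rr_last m : (0 < m)%N -> (0 < rr m m)%N.
Proof.
move=> m0; rewrite /rr /cc (bin_small (ltnSn m)) mul0n subn0 binn mul1n.
by rewrite muln_gt0 m0 fact_gt0.
Qed.

Lemma sum_lt (m : nat) (t s : R) : (0 < m)%N -> 0 <= t -> t < s ->
  \sum_(l < m.+1) (rr m l)%:R * t ^+ l.+1 < \sum_(l < m.+1) (rr m l)%:R * s ^+ l.+1.
Proof.
move=> m0 t0 ts.
have s0 : 0 <= s by apply: le_trans (ltW ts).
rewrite [X in X < _]big_ord_recr [X in _ < X]big_ord_recr /=.
apply: ler_ltD.
  apply: ler_sum => i _; apply: ler_wpM2l; first by rewrite ler0n.
  by rewrite ler_pXn2r // ?ltW // nnegrE.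
rewrite ltr_pM2l ?ltr0n ?rr_last //.
by rewrite ltr_pXn2r // nnegrE.
Qed.

Lemma EK m (z : C) : (0 < m)%N -> nc z < m%:R^-1 -> ~~ root (Psi 1 m) z.
Proof.
move=> m0 hz; apply/negP => /eqP h0.
have := @ek_id C m z; rewrite -Psi1_horner h0 mulr0 => /eqP.
rewrite eq_sym subr_eq0 => /eqP hs.
have : nc (1 : C) <= \sum_(l < m.+1) (rr m l)%:R * nc z ^+ l.+1.
  rewrite hs (le_trans (nc_sum _ _)) // le_eqVlt; apply/orP; left; apply/eqP.
  by apply: eq_bigr => i _; rewrite ncM nc_nat ncX.
rewrite Normc.normc1 => h1.
have := @sum_lt m _ _ m0 (nc_ge0 z) hz; rewrite sum_rr // => h2.
by have := lt_le_trans h2 h1; rewrite ltxx.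
Qed.

Lemma comp_prod (rs : seq C) (q : {poly C}) :
  (\prod_(x <- rs) ('X - x%:P)) \Po q = \prod_(x <- rs) (q - x%:P).
Proof.
elim: rs => [|x rs IH]; first by rewrite !big_nil -polyC1 comp_polyC.
by rewrite !big_cons comp_polyM IH comp_polyB comp_polyX comp_polyC.
Qed.

Lemma prod_rescale (rs : seq C) (y : C) : (forall x, x \in rs -> y != x) ->
  \prod_(x <- rs) (gam *: 'X + y%:P - x%:P) =
  (\prod_(x <- rs) (y - x)) *: \prod_(x <- rs) (1 + (gam / (y - x)) *: 'X).
Proof.
elim: rs => [|x rs IH] hy; first by rewrite !big_nil scale1r.
have hx : y - x != 0 by rewrite subr_eq0 hy // mem_head.
rewrite !big_cons IH; last by move=> z hz; apply: hy; rewrite inE hz orbT.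
have e : gam *: 'X + y%:P - x%:P = (y - x) *: (1 + (gam / (y - x)) *: 'X).
  by rewrite scalerDr scalerA mulrCA mulfV // mulr1 alg_polyC polyCB; ring.
by rewrite e -!mul_polyC polyCM; ring.
Qed.

Lemma core (f : {poly C}) y : f != 0 -> root (Sop f) y ->
  exists2 x, root f x & nc (x - y) <= ((size f).-1)%:R * nc gam.
Proof.
move=> f0 hr.
case: (pselect (exists2 x, root f x & nc (x - y) <= ((size f).-1)%:R * nc gam)) => // hno.
exfalso.
have hfar : forall x, root f x -> ((size f).-1)%:R * nc gam < nc (x - y).
  move=> x hx; rewrite ltNge; apply/negP => hle; apply: hno; by exists x.
have [rs hrs] := closed_field_poly_normal f.
have c0 : lead_coef f != 0 by rewrite lead_coef_eq0.
have hsz : size rs = (size f).-1 by rewrite hrs size_scale // size_prod_XsubC.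
have hroot : forall x, x \in rs -> root f x by move=> x hx; rewrite hrs rootZ // root_prod_XsubC.
case hm : (size f).-1 => [|m].
  have s1 : (size f <= 1)%N by rewrite -[size f]prednK ?size_poly_gt0 // hm.
  have d0 : f^`() = 0 by rewrite -derivn1 derivn_poly0.
  move: hr; rewrite Sop_rec d0 Sop0 scaler0 addr0 (size1_polyC s1) rootC => /eqP h.
  by move: f0; rewrite (size1_polyC s1) h eqxx.
have m0 : (0 < m.+1)%N by [].
have hfar' : forall x, x \in rs -> nc gam / nc (y - x) < m.+1%:R^-1.
  move=> x hx; have := hfar x (hroot x hx); rewrite hm => h.
  have d0 : 0 < nc (y - x).
    by rewrite -[nc (y - x)]normcN opprB; apply: le_lt_trans h; rewrite mulr_ge0 ?nc_ge0.
  rewrite ltr_pdivrMr // mulrC ltr_pdivlMr ?ltr0n // -[nc (y - x)]normcN opprB.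
  by rewrite mulrC.
have hyx : forall x, x \in rs -> y != x.
  move=> x hx; apply/eqP => eyx; have := hfar x (hroot x hx).
  by rewrite eyx subrr Normc.normc0 ltNge mulr_ge0 ?nc_ge0.
pose us := [seq gam / (y - x) | x <- rs].
have hu : forall u, u \in us -> nc u < m.+1%:R^-1.
  by move=> u /mapP [x hx ->]; rewrite ncM Normc.normcV; apply: hfar'.
have hbase : forall z, nc z < m.+1%:R^-1 -> ~~ root (Psi 1 (size us + 0)) z.
  by move=> z hz; rewrite size_map hsz hm addn0; apply: EK.
have hg := grace _ us 1 0 hu hbase 0.
rewrite Normc.normc0 invr_gt0 ltr0n /= in hg.
have := hg isT; rewrite /root Psi0 mul1r big_map => hL.
move: hr; rewrite /root bridge hrs comp_polyZ comp_prod prod_rescale // !LfZ.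
rewrite !mulf_eq0 (negPf c0) (negPf hL) orbF /=.
have -> : (\prod_(x <- rs) (y - x) == 0) = false.
  by apply/negbTE; rewrite prodf_seq_neq0; apply/allP => x hx /=; rewrite subr_eq0 hyx.
by [].
Qed.

Lemma size_Sop_eq (f : {poly C}) : f != 0 -> size (Sop f) = size f.
Proof.
move=> f0; rewrite Sop_rec size_polyDl //.
apply: (leq_ltn_trans (size_scale_leq _ _)).
exact: (leq_ltn_trans (size_Sop _) (lt_size_deriv f0)).
Qed.

Lemma Sop_neq0 (f : {poly C}) : f != 0 -> Sop f != 0.
Proof. by move=> f0; rewrite -size_poly_eq0 size_Sop_eq // size_poly_eq0. Qed.

Lemma has_root (p : {poly C}) : (1 < size p)%N -> exists x, root p x.
Proof.
move=> hs; have [rs hrs] := closed_field_poly_normal p.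
have p0 : p != 0 by rewrite -size_poly_eq0; case: (size p) hs.
have c0 : lead_coef p != 0 by rewrite lead_coef_eq0.
have hsz : size rs = (size p).-1 by rewrite hrs size_scale // size_prod_XsubC.
case: rs hrs hsz => [|x rs] hrs hsz.
  by move: hs hsz => /=; case: (size p) => [|[|k]].
by exists x; rewrite hrs rootZ // root_prod_XsubC mem_head.
Qed.

Lemma exists_nonroot (p : {poly C}) : p != 0 -> exists z, ~~ root p z.
Proof.
move=> p0; case: (pselect (exists z, ~~ root p z)) => // hn; exfalso.
have hall : forall z, root p z.
  by move=> z; apply/negPn/negP => hz; apply: hn; exists z.
have h1 : all (root p) [seq i%:R | i <- iota 0 (size p)].
  by apply/allP => z _; apply: hall.
have h2 : uniq [seq (i%:R : C) | i <- iota 0 (size p)].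
  by rewrite map_inj_uniq ?iota_uniq // => i j /eqP; rewrite eqr_nat => /eqP.
by have := max_poly_roots p0 h1 h2; rewrite size_map size_iota ltnn.
Qed.

Lemma nonempty_of (A : set C) : A <> set0 -> exists y, A y.
Proof.
move=> h; case: (pselect (exists y, A y)) => // hn; exfalso; apply: h.
by apply/seteqP; split => y // hy; apply: hn; exists y.
Qed.

Lemma prod_lt (s : seq C) (F : C -> R) (c : R) : s != [::] ->
  (forall y, y \in s -> 0 <= F y /\ F y < c) -> \prod_(y <- s) F y < c ^+ size s.
Proof.
elim: s => [//|x s IH] _ h.
have [hx0 hxc] := h x (mem_head _ _).
case: s IH h => [|x' s] IH h.
  by rewrite big_cons big_nil mulr1 expr1.
rewrite big_cons [size _]/= exprS.
have hs : \prod_(y <- x' :: s) F y < c ^+ size (x' :: s).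
  by apply: IH => // y hy; apply: h; rewrite inE hy orbT.
apply: ltr_pM => //; rewrite big_seq; apply: prodr_ge0 => y hy; apply: (h y _).1.
by rewrite inE hy orbT.
Qed.

Lemma upper n (f : {poly C}) : (size f <= n.+1)%N ->
  (d_h (Zset f) (Zset (Sop f)) <= (n%:R * cabs gam)%:E)%E.
Proof.
move=> hf.
have b0 : (0 <= (n%:R * cabs gam)%:E)%E by rewrite lee_fin mulr_ge0 ?nc_ge0.
have [->|f0] := eqVneq f 0.
  rewrite Sop0.
  have ZT : Zset (0 : {poly C}) = setT.
    by rewrite /Zset; apply/seteqP; split => z // _; rewrite /= root0.
  have nT0 : ~ (setT = set0 :> set C).
    by move=> h; have : (setT : set C) 0 by []; rewrite h.
  by rewrite /d_h ZT (asboolF nT0) /= (asboolT (erefl setT)).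
have core' : forall y, Zset (Sop f) y ->
    exists2 x, Zset f x & (cabs (x - y) <= n%:R * cabs gam).
  move=> y hy; have [x hx hxy] := @core f y f0 hy; exists x => //.
  apply: (le_trans hxy); apply: ler_wpM2r; first exact: nc_ge0.
  by rewrite ler_nat -ltnS prednK // size_poly_gt0.
have [A0|A0] := pselect (Zset f = set0); have [B0|B0] := pselect (Zset (Sop f) = set0).
- by rewrite /d_h (asboolT A0) (asboolT B0).
- exfalso; have [y hy] := nonempty_of _ B0.
  by have [x hx _] := core' y hy; move: hx; rewrite A0.
- exfalso; have [x hx] := nonempty_of _ A0.
  have := @root_size_gt1 _ x f f0 hx; rewrite -(@size_Sop_eq f f0) => /has_root [y hy].
  by have : Zset (Sop f) y by []; rewrite B0.
- rewrite /d_h (asboolF A0) (asboolF B0) /=.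
  case: ifP => _ //.
  apply: ge_ereal_sup => _ [y hy <-].
  apply: ereal_inf_le; have [x hx hxy] := core' y hy.
  by exists (cabs (x - y))%:E; [exists x | rewrite lee_fin].
Qed.

Lemma lower n : (0 < n)%N ->
  ((powR (n`!%:R : R) (n%:R)^-1 * cabs gam)%:E <= d_h (Zset 'X^n) (Zset (Sop 'X^n)))%E.
Proof.
move=> n0.
set g := Sop 'X^n.
have Xn0 : 'X^n != 0 :> {poly C} by rewrite -size_poly_eq0 size_polyXn.
have g0 : g != 0 := @Sop_neq0 _ Xn0.
have lg : lead_coef g = 1.
  rewrite /g Sop_rec lead_coefDl ?lead_coefXn //.
  have := lt_size_deriv Xn0; rewrite size_polyXn => h.
  apply: leq_ltn_trans (size_scale_leq _ _) _.
  exact: leq_ltn_trans (size_Sop _) h.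
have sg : size g = n.+1 by rewrite size_Sop_eq // size_polyXn.
have g00 : g.[0] = gam ^+ n * (n`!)%:R.
  by rewrite /g bridge polyC0 addr0 comp_Xn_poly exprZn LfZ Lf_Xn.
have [rs hrs] := closed_field_poly_normal g; rewrite lg scale1r in hrs.
have hsz : size rs = n by move: sg; rewrite hrs size_prod_XsubC => -[].
have hprod : \prod_(y <- rs) nc y = nc gam ^+ n * (n`!)%:R.
  have := congr1 nc g00; rewrite {1}hrs horner_prod (big_morph _ ncM (@Normc.normc1 R)).
  rewrite ncM ncX nc_nat => <-; apply: eq_bigr => y _.
  by rewrite hornerXsubC sub0r normcN.
set c := powR (n`!%:R : R) (n%:R)^-1 * cabs gam.
have c0 : 0 <= c by rewrite mulr_ge0 ?powR_ge0 ?nc_ge0.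
have cn : c ^+ n = nc gam ^+ n * (n`!)%:R.
  rewrite /c exprMn mulrC; congr (_ * _).
  rewrite -powR_mulrn ?powR_ge0 // -powRrM mulVf ?pnatr_eq0 -?lt0n //.
  by rewrite powRr1 ?ler0n.
have [y hy hcy] : exists2 y, y \in rs & c <= nc y.
  case: (pselect (exists2 y, y \in rs & c <= nc y)) => // hn; exfalso.
  have hlt : forall y, y \in rs -> 0 <= nc y /\ nc y < c.
    move=> y hy; split; first exact: nc_ge0.
    by rewrite ltNge; apply/negP => h; apply: hn; exists y.
  have rs0 : rs != [::] by apply/eqP => e; move: hsz; rewrite e => /= e0; move: n0; rewrite -e0.
  have := @prod_lt rs _ c rs0 hlt; rewrite hprod hsz cn.
  by rewrite ltxx.
have hyg : Zset g y by rewrite /Zset /= hrs root_prod_XsubC.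
have A0 : Zset ('X^n : {poly C}) <> set0.
  move=> h; have : Zset ('X^n : {poly C}) 0 by rewrite /Zset /= /root hornerXn expr0n eqn0Ngt n0.
  by rewrite h.
have AT : Zset ('X^n : {poly C}) <> setT.
  move=> h; have : Zset ('X^n : {poly C}) 1 by rewrite h.
  by rewrite /Zset /= /root hornerXn expr1n oner_eq0.
have B0 : Zset g <> set0 by move=> h; move: hyg; rewrite h.
have BT : Zset g <> setT.
  move=> h; have [z hz] := @exists_nonroot g g0.
  have : Zset g z by rewrite h.
  by rewrite /Zset /= (negPf hz).
rewrite /d_h (asboolF A0) (asboolF B0) (asboolF AT) (asboolF BT) /=.
apply: (@le_trans _ _ (ereal_inf [set (cabs (x - y))%:E | x in Zset ('X^n : {poly C})])).
  apply: le_ereal_inf_tmp => _ [x hx <-].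
  move: hx; rewrite /Zset /= /root hornerXn expf_eq0 n0 /= => /eqP ->.
  by rewrite lee_fin /cabs sub0r normcN.
by apply: ereal_sup_ubound; exists y.
Qed.

End Aux.

Theorem mainTheorem17 (R : realType) (n : nat) (gamma : R[i])
    (T : {poly R[i]} -> {poly R[i]}) :
  (1 <= n)%N ->
  (forall f : {poly R[i]}, (size f <= n.+1)%N ->
     (size (T f) <= n.+1)%N /\ T f - gamma *: (T f)^`() = f) ->
  ((powR (n`!%:R : R) (n%:R)^-1 * cabs gamma)%:E <= K_h n T)%E /\
  (K_h n T <= (n%:R * cabs gamma)%:E)%E.
Proof.
move=> n1 hT.
have TS : forall f : {poly R[i]}, (size f <= n.+1)%N -> T f = @Sop R gamma f.
  move=> f hf; have [_ he] := hT f hf.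
  apply/eqP; rewrite -subr_eq0; apply/eqP; apply: (@Iop_inj R gamma).
  have e : forall a b c d : {poly R[i]}, (a - b) - (c - d) = (a - c) - (b - d).
    by move=> a b c d; ring.
  by rewrite derivB scalerBr e he (@Sop_eq R gamma) subrr.
split.
  apply: (le_trans (@lower R gamma n n1)); rewrite /K_h; apply: ereal_sup_ubound.
  exists 'X^n; first by rewrite /Pn /= size_polyXn.
  by rewrite TS // size_polyXn.
apply: ge_ereal_sup => _ [f hf <-]; rewrite TS //; exact: (@upper R gamma n f hf).
Qed.
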